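(* In the option framework described in the context, let the intra-option policies $\pi_o(s,a,\theta)$ be differentiable in $\theta$, and for a vector $\eta$ (of the same dimension as $\theta$) define the compatible function approximator $f^{\pi_o}_\eta(s,a)=\eta^T\frac{\partial\ln\pi_o(s,a,\theta)}{\partial\theta}$ and the squared error $$\epsilon(\eta,\theta)=\sum_{s,o,a}\mu_{\mathcal O}(s,o)\pi_o(s,a,\theta)\big(f^{\pi_o}_\eta(s,a)-a_U(s,o,a)\big)^2 .$$ Let $G_\theta=\sum_{s,o}\mu_{\mathcal O}(s,o)\sum_a\pi_o(s,a,\theta)\frac{\partial\ln\pi_o(s,a,\theta)}{\partial\theta}\big(\frac{\partial\ln\pi_o(s,a,\theta)}{\partial\theta}\big)^T$ (assumed invertible). If $\tilde\eta$ is a local minimum of $\epsilon(\cdot,\theta)$, then $$G_\theta^{-1}\frac{\partial q_{\pi_{\mathcal O}}(s_0,o_0)}{\partial\theta}=\tilde\eta,$$ i.e. $\tilde\eta$ is the natural gradient of the expected discounted return with respect to $\theta$.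
   Context: Finite MDP with states $\mathcal S$, actions $\mathcal A$, transition function $P$, discount $\gamma$; finite option set $\mathcal O$ with intra-option policies $\pi_o(s,a,\theta)$, terminations $\beta_o(s)$ and a policy over options $\pi_{\mathcal O}(s,o)$; in state $s_t$ with option $o_t$ the agent draws $a_t\sim\pi_{o_t}(s_t,\cdot,\theta)$, moves to $s_{t+1}$, and $o_t$ terminates there with probability $\beta_{o_t}(s_{t+1})$, after which a new option is drawn from $\pi_{\mathcal O}(s_{t+1},\cdot)$. Value functions (expected discounted returns): $q_{\pi_{\mathcal O}}(s,o)$ given $S_0=s,O_0=o$; $q_U(s,o,a)$ given $S_0=s,O_0=o,A_0=a$; state-option-action advantage $a_U(s,o,a)=q_U(s,o,a)-q_{\pi_{\mathcal O}}(s,o)$. $\mu_{\mathcal O}(s,o)=\sum_{t\ge0}\gamma^t\Pr(S_t=s,O_t=o\mid s_0,o_0)$ is the discounted weighting of state-option pairs from the start pair $(s_0,o_0)$ (treated as the stationary distribution of the process that terminates with probability $1-\gamma$ per step). The gradient $\partial q_{\pi_{\mathcal O}}(s_0,o_0)/\partial\theta$ is given by the intra-option policy gradient theorem: $\frac{\partial q_{\pi_{\mathcal O}}(s_0,o_0)}{\partial\theta}=\sum_{s,o}\mu_{\mathcal O}(s,o)\sum_a\frac{\partial\pi_o(s,a,\theta)}{\partial\theta}q_U(s,o,a)$. *)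

(* Defs.v *)
From HB Require Import structures.
From mathcomp Require Import all_boot all_order all_algebra.
From mathcomp Require Import all_classical all_reals all_analysis.
Set Implicit Arguments. Unset Strict Implicit. Unset Printing Implicit Defensive.
Import Order.TTheory GRing.Theory Num.Theory.
Import numFieldNormedType.Exports.
Local Open Scope ring_scope.

(* A finite MDP with a finite option set, minus the intra-option policies:
   P s a s' = transition probability, rew s a = expected immediate reward,
   gam = discount, beta o s = termination prob. of option o in state s,
   piO s o = policy over options. *)
Record optMDP (R : realType) (S A O : finType) := OptMDP {
  P : S -> A -> S -> R;
  rew : S -> A -> R;
  gam : R;
  beta : O -> S -> R;
  piO : S -> O -> R }.

(* Intra-option policies parameterised by theta : 'cV[R]_d:
   pi o theta s a = pi_o(s,a,theta). *)
Definition policy (R : realType) (S A O : finType) (d : nat) :=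
  O -> 'cV[R]_d -> S -> A -> R.

Section Defs.
Variables (R : realType) (S A O : finType) (d : nat).
Variables (M : optMDP R S A O) (pi : policy R S A O d).

(* one-step transition kernel of the (state, option) process:
   (s,o) -> (s',o'): draw a ~ pi_o(s,.), s' ~ P, then o continues with prob
   1 - beta_o(s'), or terminates and o' ~ piO(s',.). *)
Definition kernel (th : 'cV[R]_d) (x y : S * O) : R :=
  \sum_(a : A) pi x.2 th x.1 a * P M x.1 a y.1 *
     ((1 - beta M x.2 y.1) * (y.2 == x.2)%:R + beta M x.2 y.1 * piO M y.1 y.2).

(* distr th x0 t y = Pr(S_t = y.1, O_t = y.2 | S_0,O_0 = x0) *)
Fixpoint distr (th : 'cV[R]_d) (x0 : S * O) (t : nat) (y : S * O) : R :=
  match t with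
  | 0 => (y == x0)%:R
  | t'.+1 => \sum_(x : S * O) distr th x0 t' x * kernel th x y
  end.

Definition muO (th : 'cV[R]_d) (x0 : S * O) (y : S * O) : R :=
  limn (fun n => \sum_(0 <= t < n) gam M ^+ t * distr th x0 t y).

Definition rbar (th : 'cV[R]_d) (y : S * O) : R :=
  \sum_(a : A) pi y.2 th y.1 a * rew M y.1 a.

Definition qO (th : 'cV[R]_d) (s : S) (o : O) : R :=
  limn (fun n => \sum_(0 <= t < n)
         gam M ^+ t * \sum_(y : S * O) distr th (s, o) t y * rbar th y).

(* value upon arrival in s' with option o *)
Definition Uval (th : 'cV[R]_d) (o : O) (s' : S) : R :=
  (1 - beta M o s') * qO th s' o +
  beta M o s' * \sum_(o' : O) piO M s' o' * qO th s' o'.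

Definition qU (th : 'cV[R]_d) (s : S) (o : O) (a : A) : R :=
  rew M s a + gam M * \sum_(s' : S) P M s a s' * Uval th o s'.

Definition aU (th : 'cV[R]_d) (s : S) (o : O) (a : A) : R :=
  qU th s o a - qO th s o.

End Defs.

Definition grad (R : realType) (d : nat) (f : 'cV[R]_d -> R) (th : 'cV[R]_d)
  : 'cV[R]_d := \col_(i < d) 'D_(delta_mx i 0) f th.

Section Defs2.
Variables (R : realType) (S A O : finType) (d : nat).
Variables (M : optMDP R S A O) (pi : policy R S A O d).

Definition score (th : 'cV[R]_d) (o : O) (s : S) (a : A) : 'cV[R]_d :=
  grad (fun t => ln (pi o t s a)) th.

Definition fcompat (eta th : 'cV[R]_d) (o : O) (s : S) (a : A) : R :=
  (eta^T *m score th o s a) 0 0.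

Definition eps_err (x0 : S * O) (eta th : 'cV[R]_d) : R :=
  \sum_(s : S) \sum_(o : O) \sum_(a : A)
     muO M pi th x0 (s, o) * pi o th s a *
     (fcompat eta th o s a - aU M pi th s o a) ^+ 2.

Definition Gmat (x0 : S * O) (th : 'cV[R]_d) : 'M[R]_d :=
  \sum_(s : S) \sum_(o : O) muO M pi th x0 (s, o) *:
     \sum_(a : A) pi o th s a *: (score th o s a *m (score th o s a)^T).

End Defs2.

(* Main.v *)
Require Import Defs.
From HB Require Import structures.
From mathcomp Require Import all_boot all_order all_algebra.
From mathcomp Require Import all_classical all_reals all_analysis.
From mathcomp Require Import ring lra.
Import Order.TTheory GRing.Theory Num.Theory.
Import numFieldNormedType.Exports.
Local Open Scope ring_scope.
Lemma D_ln (R : realType) d (f : 'cV[R]_d -> R) (x v : 'cV[R]_d) :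
  differentiable f x -> 0 < f x ->
  'D_v (fun t => ln (f t)) x = (f x)^-1 * 'D_v f x.
Proof.
move=> df fx.
have dl : differentiable (@ln R) (f x).
  by apply/derivable1_diffP; apply: ex_derive; exact: is_derive1_ln.
have -> : (fun t => ln (f t)) = (@ln R) \o f by [].
rewrite deriveE; last exact: differentiable_comp.
rewrite diff_comp // /= diff1E // [in RHS]deriveE //.
rewrite derive1E.
have [_ ->] := is_derive1_ln fx.
by rewrite mulrC.
Qed.

Lemma D_sum (R : realType) d (A : finType) (f : A -> 'cV[R]_d -> R) (x v : 'cV[R]_d) :
  (forall a, differentiable (f a) x) ->
  'D_v (fun t => \sum_a f a t) x = \sum_a 'D_v (f a) x.
Proof.
move=> df.
suff H : is_derive x v (fun t => \sum_a f a t) (\sum_a 'D_v (f a) x).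
  by rewrite derive_val.
have -> : (fun t => \sum_a f a t) = \sum_a f a.
  by apply/funext => t; rewrite fct_sumE.
elim/big_ind2 : _ => //.
- exact: is_derive_cst.
- by move=> *; exact: is_deriveD.
- move=> a _; apply: derivableP; exact: diff_derivable.
Qed.
Lemma quad_pos (R : realType) (e b c : R) : 0 < e ->
  (forall t : R, `|t| < e -> 0 <= t * b + t ^+ 2 * c) -> ~ (0 < b).
Proof.
move=> e0 H b0.
set D := e * `|c| + b + e.
have D0 : 0 < D by rewrite /D; have := normr_ge0 c; nra.
set dl := e * b / D.
have dl0 : 0 < dl by rewrite /dl divr_gt0 // mulr_gt0.
have dle : dl < e.
  rewrite /dl ltr_pdivrMr //; rewrite /D; have := normr_ge0 c; nra.
have := H (- dl); rewrite normrN gtr0_norm // => /(_ dle).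
have h1 : dl * c <= dl * `|c| by apply: ler_wpM2l; [exact: ltW | exact: ler_norm].
have h2 : dl * `|c| < b.
  rewrite /dl mulrAC ltr_pdivrMr //; rewrite /D; have := normr_ge0 c; nra.
rewrite sqrrN expr2 => h3.
nra.
Qed.

Lemma quad_zero (R : realType) (b c : R) :
  (\forall t \near (0 : R), 0 <= t * b + t ^+ 2 * c) -> b = 0.
Proof.
move=> /nbhs_normP [e /= e0 He].
have H : forall t : R, `|t| < e -> 0 <= t * b + t ^+ 2 * c.
  move=> t te; apply: He => /=; rewrite sub0r normrN //.
have /negP := @quad_pos R e b c e0 H.
have : ~ (0 < - b).
  apply: (@quad_pos R e (- b) c e0) => t te.
  have := H (- t); rewrite normrN => /(_ te).
  by rewrite sqrrN mulrN mulNr.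
rewrite oppr_gt0 => /negP h1 h2.
by apply/eqP; rewrite eq_le !leNgt h1 h2.
Qed.
Lemma sum3_split (R : realType) (S A O : finType) (X Y Z : S -> O -> A -> R) (t : R) :
  \sum_s \sum_o \sum_a (X s o a + t * Y s o a + t ^+ 2 * Z s o a) =
  \sum_s \sum_o \sum_a X s o a + t * \sum_s \sum_o \sum_a Y s o a
  + t ^+ 2 * \sum_s \sum_o \sum_a Z s o a.
Proof.
rewrite !mulr_sumr -!big_split; apply: eq_bigr => s _ /=.
rewrite !mulr_sumr -!big_split; apply: eq_bigr => o _ /=.
by rewrite !mulr_sumr -!big_split.
Qed.

Lemma fcompat_shift (R : realType) (S A O : finType) d (pi : policy R S A O d)
  (eta th : 'cV[R]_d) (t : R) (i : 'I_d) o s a :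
  fcompat pi (eta + t *: delta_mx i 0) th o s a =
  fcompat pi eta th o s a + t * score pi th o s a i 0.
Proof.
rewrite /fcompat linearD linearZ /= mulmxDl -scalemxAl trmx_delta -rowE.
by rewrite !mxE.
Qed.

Lemma outer_eta (R : realType) d (psi eta : 'cV[R]_d) :
  psi *m psi^T *m eta = (eta^T *m psi) 0 0 *: psi.
Proof.
rewrite -mulmxA [psi^T *m eta]mx11_scalar mul_mx_scalar.
congr (_ *: _); rewrite !mxE; apply: eq_bigr => k _; by rewrite !mxE mulrC.
Qed.
Theorem mainTheorem5 (R : realType) (S A O : finType) (d : nat)
  (M : optMDP R S A O) (pi : policy R S A O d)
  (s0 : S) (o0 : O) (th eta_t : 'cV[R]_d) :
  (* standing assumptions on the MDP and the options *)
  0 <= gam M < 1 ->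
  (forall s a s', 0 <= P M s a s') ->
  (forall s a, \sum_(s' : S) P M s a s' = 1) ->
  (forall o s, 0 <= beta M o s <= 1) ->
  (forall s o, 0 <= piO M s o) ->
  (forall s, \sum_(o : O) piO M s o = 1) ->
  (* intra-option policies: (strictly positive, so ln pi is defined)
     probability distributions, differentiable in theta *)
  (forall o t s a, 0 < pi o t s a) ->
  (forall o t s, \sum_(a : A) pi o t s a = 1) ->
  (forall o s a t, differentiable (fun t' => pi o t' s a) t) ->
  (* intra-option policy gradient theorem (given in the context) *)
  grad (fun t => qO M pi t s0 o0) th =
    \sum_(s : S) \sum_(o : O) muO M pi th (s0, o0) (s, o) *:
      \sum_(a : A) qU M pi th s o a *: grad (fun t => pi o t s a) th ->
  (* G_theta invertible *)
  Gmat M pi (s0, o0) th \in unitmx ->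
  (* eta_t is a local minimum of epsilon(., theta) *)
  (\forall eta \near eta_t,
      eps_err M pi (s0, o0) eta_t th <= eps_err M pi (s0, o0) eta th) ->
  invmx (Gmat M pi (s0, o0) th) *m grad (fun t => qO M pi t s0 o0) th = eta_t.
Proof.
move=> _ _ _ _ _ _ pi_gt0 pi_sum pi_diff Hgrad Gunit Hmin.
set x0 := (s0, o0).
set mu := fun s o => muO M pi th x0 (s, o).
set psi := fun o s a => score pi th o s a.
have gradpi : forall o s a,
    grad (fun t => pi o t s a) th = pi o th s a *: psi o s a.
  move=> o s a; apply/matrixP => i j; rewrite !mxE.
  rewrite (@D_ln R d (fun t => pi o t s a)) // mulrA mulfV ?mul1r //.
  exact: lt0r_neq0.
have gradsum : forall o s, \sum_a grad (fun t => pi o t s a) th = 0.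
  move=> o s; apply/matrixP => i j; rewrite summxE mxE.
  under eq_bigr do rewrite mxE.
  rewrite -(@D_sum R d A (fun a t => pi o t s a)) //.
  have -> : (fun t => \sum_a pi o t s a) = cst 1.
    by apply/funext => t; rewrite pi_sum.
  by rewrite derive_cst.
set r := \sum_s \sum_o mu s o *:
   \sum_a (pi o th s a * aU M pi th s o a) *: psi o s a.
have gradq : grad (fun t => qO M pi t s0 o0) th = r.
  rewrite Hgrad; apply: eq_bigr => s _; apply: eq_bigr => o _.
  congr (_ *: _).
  have -> : \sum_a qU M pi th s o a *: grad (fun t => pi o t s a) th =
      \sum_a (aU M pi th s o a *: grad (fun t => pi o t s a) th
              + qO M pi th s o *: grad (fun t => pi o t s a) th).
    by apply: eq_bigr => a _; rewrite -scalerDl /aU subrK.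
  rewrite big_split /= -scaler_sumr gradsum scaler0 addr0.
  by apply: eq_bigr => a _; rewrite gradpi scalerA mulrC.
set z := \sum_s \sum_o mu s o *:
   \sum_a (pi o th s a * (fcompat pi eta_t th o s a - aU M pi th s o a))
      *: psi o s a.
have Geta : Gmat M pi x0 th *m eta_t = r + z.
  rewrite /Gmat /r /z -big_split /= mulmx_suml; apply: eq_bigr => s _.
  rewrite -big_split /= mulmx_suml; apply: eq_bigr => o _.
  rewrite -scalemxAl -scalerDr; congr (_ *: _).
  rewrite -big_split /= mulmx_suml; apply: eq_bigr => a _.
  rewrite -scalemxAl outer_eta scalerA -scalerDl; congr (_ *: _).
  rewrite /fcompat; ring.
have z0 : z = 0.
  apply/matrixP => i j; rewrite (ord1 j) [RHS]mxE.
  set b := \sum_s \sum_o \sum_a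
     mu s o * pi o th s a * (fcompat pi eta_t th o s a - aU M pi th s o a)
       * psi o s a i 0.
  set c := \sum_s \sum_o \sum_a mu s o * pi o th s a * (psi o s a i 0) ^+ 2.
  have zb : z i 0 = b.
    rewrite /z summxE; apply: eq_bigr => s _; rewrite summxE.
    apply: eq_bigr => o _; rewrite mxE summxE mulr_sumr.
    by apply: eq_bigr => a _; rewrite mxE; ring.
  have epsE : forall t, eps_err M pi x0 (eta_t + t *: delta_mx i 0) th =
      eps_err M pi x0 eta_t th + t * (2 * b) + t ^+ 2 * c.
    move=> t.
    transitivity (\sum_s \sum_o \sum_a
      (mu s o * pi o th s a * (fcompat pi eta_t th o s a - aU M pi th s o a) ^+ 2
       + t * (2 * (mu s o * pi o th s a * (fcompat pi eta_t th o s a - aU M pi th s o a)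
           * psi o s a i 0))
       + t ^+ 2 * (mu s o * pi o th s a * (psi o s a i 0) ^+ 2))).
      rewrite /eps_err; apply: eq_bigr => s _; apply: eq_bigr => o _.
      apply: eq_bigr => a _; rewrite fcompat_shift /mu /psi; ring.
    rewrite sum3_split; congr (_ + _ * _ + _).
    rewrite /b !mulr_sumr; apply: eq_bigr => s _; rewrite !mulr_sumr.
    by apply: eq_bigr => o _; rewrite !mulr_sumr.
  have Hq : \forall t \near (0 : R), 0 <= t * (2 * b) + t ^+ 2 * c.
    have := Hmin; move/nbhs0P => /(near0Z (delta_mx i 0)).
    by apply: filterS => t; rewrite epsE -addrA lerDl.
  have b2 := @quad_zero R _ _ Hq.
  have b0 : b = 0.
    by move/eqP: b2; rewrite mulf_eq0 pnatr_eq0 /= => /eqP.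
  by rewrite zb b0.
rewrite gradq -[r](addr0) -z0 -Geta mulKmx //.
Qed.
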